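(* Let $R$ be a schematic semi-graded ring and $M$ an LSG $R$-module. Then the module of quotients $Q(M)$, with the semi-graduation described below, is $T$-closed in $\mathsf{LSG}\text{-}R$: for every LSG $R$-module $N$, every SG submodule $N'$ of $N$ with $N/N'$ torsion, and every homogeneous $R$-homomorphism $N'\to Q(M)$, there is a unique homogeneous $R$-homomorphism $N\to Q(M)$ extending it.
   Context: Rings are associative with $1$; modules are left modules. A ring $R$ is semi-graded (SG) if there are additive subgroups $R_n$ ($n\in\mathbb{Z}$) with $R=\bigoplus_n R_n$, $R_mR_n\subseteq\bigoplus_{k\le m+n}R_k$, and $1\in R_0$; positively SG if $R_n=0$ for $n<0$. An $R$-module $M$ is SG if $M=\bigoplus_nM_n$ with $R_mM_n\subseteq\bigoplus_{k\le m+n}M_k$ for $m\ge0$; homomorphisms are homogeneous if they preserve degrees; an SG submodule is a submodule $N$ with $N=\bigoplus_n(N\cap M_n)$. Let $R'_n=\{r\in R_n: rh\in R_{n+m}\ \forall m,\forall h\in R_m\}$, $R''_n=\{r\in R'_n: hr\in R_{n+m}\ \forall m,\forall h\in R_m\}$, $R'=\bigcup R'_n$, $R''=\bigcup R''_n$. $M$ is LSG if $R'_nM_m\subseteq M_{n+m}$ for all $n,m$; $\mathsf{LSG}\text{-}R$ is the category of LSG modules with homogeneous homomorphisms. A left Ore set $S$ is good if $S\subseteq R''$ and for $s\in S$, $r\in R'$ there are $u\in R'$, $v\in S$ with $us=vr$. For positively SG $R$, $R_{\ge t}$ is the intersection of all two-sided ideals that are SG submodules containing $\bigoplus_{k\ge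 t}R_k$. $m\in M$ is torsion if $(R_{\ge t})^nm=0$ for some $n,t\ge0$; $T(M)$ is the set of torsion elements. $R$ is schematic if it is positively SG, left Noetherian, and there is a finite set $I$ of good left Ore sets $S$ with $S\cap\bigoplus_{k\ge1}R_k\ne\emptyset$ such that for each $(x_S)\in\prod_{S\in I}S$ there are $t,m$ with $(R_{\ge t})^m\subseteq\sum_{S\in I}Rx_S$. $Q(M)$ is the module of quotients of $M$ with respect to this torsion theory (Goldman/Gabriel localization): an $R$-module containing $M'=M/T(M)$, $T$-torsion-free and $T$-injective in the category of all $R$-modules, with $Q(M)/M'$ torsion. Its semi-graduation: $\xi\in Q(M)$ is homogeneous of degree $k$ iff there exist $n,t\in\mathbb{N}$ with $(R_{\ge n})^t\xi\subseteq M'$ and, for every homogeneous $s\in(R_{\ge n})^t\cap R'$, $s\xi$ is homogeneous of degree $k+\deg s$ in $M'$ (with $M'$ carrying the semi-graduation of $M/T(M)$); with it $Q(M)$ is an LSG $R$-module. *)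

(* Defs.v *)
From HB Require Import structures.
From mathcomp Require Import all_boot all_order all_algebra.
Set Implicit Arguments. Unset Strict Implicit. Unset Printing Implicit Defensive.
Import Order.TTheory GRing.Theory Num.Theory.
Local Open Scope ring_scope.

Section Graded.
Variable V : zmodType.

Definition sumIn (c : int -> Prop) (P : int -> V -> Prop) (x : V) : Prop :=
  exists (s : seq int) (f : int -> V),
    (forall k, k \in s -> c k /\ P k (f k)) /\ x = \sum_(k <- s) f k.

Definition sumLe (P : int -> V -> Prop) (n : int) := sumIn (fun k => k <= n) P.
Definition sumGe (P : int -> V -> Prop) (n : int) := sumIn (fun k => n <= k) P.

Definition directSumDecomp (P : int -> V -> Prop) : Prop :=
  [/\ (forall k, P k 0 /\ (forall x y, P k x -> P k y -> P k (x - y))),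
      (forall x, sumIn (fun _ => True) P x) &
      (forall (s : seq int) (f : int -> V), uniq s ->
          (forall k, k \in s -> P k (f k)) -> \sum_(k <- s) f k = 0 ->
          forall k, k \in s -> f k = 0)].
End Graded.

Section Ring.
Variable R : pzRingType.
Implicit Types (Rg : int -> R -> Prop).

Definition SGring Rg : Prop :=
  [/\ directSumDecomp Rg,
      (forall m n x y, Rg m x -> Rg n y -> sumLe Rg (m + n) (x * y)) & Rg 0 1].

Definition positivelySG Rg : Prop :=
  SGring Rg /\ forall n x, n < 0 -> Rg n x -> x = 0.

Definition Rprime Rg (n : int) (r : R) : Prop :=
  Rg n r /\ forall m h, Rg m h -> Rg (n + m) (r * h).
Definition Rsecond Rg (n : int) (r : R) : Prop :=
  Rprime Rg n r /\ forall m h, Rg m h -> Rg (n + m) (h * r).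

Definition leftIdeal (I : R -> Prop) : Prop :=
  [/\ I 0, (forall x y, I x -> I y -> I (x + y)) & (forall r x, I x -> I (r * x))].
Definition twoSidedIdeal (I : R -> Prop) : Prop :=
  leftIdeal I /\ forall r x, I x -> I (x * r).

Definition leftNoetherian : Prop :=
  forall I, leftIdeal I -> exists (k : nat) (g : 'I_k -> R),
    forall x, I x <-> exists c : 'I_k -> R, x = \sum_(i < k) c i * g i.

Definition prodSet (A B : R -> Prop) (x : R) : Prop :=
  exists s : seq (R * R), (forall p, p \in s -> A p.1 /\ B p.2) /\
                          x = \sum_(p <- s) p.1 * p.2.
Fixpoint idealPow (I : R -> Prop) (k : nat) : R -> Prop :=
  if k is k'.+1 then prodSet (idealPow I k') I else (fun _ => True).

(* R_{>= t}: intersection of all two-sided ideals which are SG submodules of R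
   and contain (+)_{k >= t} R_k *)
Definition Rge Rg (t : int) (x : R) : Prop :=
  forall I : R -> Prop, twoSidedIdeal I ->
    (forall y, I y -> sumIn (fun _ => True) (fun k z => Rg k z /\ I z) y) ->
    (forall y, sumGe Rg t y -> I y) -> I x.

Definition leftOreSet (S : R -> Prop) : Prop :=
  [/\ S 1, ~ S 0, (forall s s', S s -> S s' -> S (s * s')) &
      (forall s r, S s -> exists u v, S v /\ u * s = v * r)].
Definition goodOreSet Rg (S : R -> Prop) : Prop :=
  [/\ leftOreSet S, (forall s, S s -> exists n, Rsecond Rg n s) &
      (forall s r, S s -> (exists n, Rprime Rg n r) ->
         exists u v, (exists n, Rprime Rg n u) /\ S v /\ u * s = v * r)].

Definition schematic Rg : Prop :=
  [/\ positivelySG Rg, leftNoetherian &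
    exists (n : nat) (Sf : 'I_n -> R -> Prop),
      (forall i, goodOreSet Rg (Sf i)) /\
      (forall i, exists x, Sf i x /\ sumGe Rg 1 x) /\
      (forall x : 'I_n -> R, (forall i, Sf i (x i)) ->
         exists (t m : nat), forall r, idealPow (Rge Rg t%:Z) m r ->
           exists c : 'I_n -> R, r = \sum_(i < n) c i * x i)].

Section Modules.
Variable Rg : int -> R -> Prop.

Definition SGmodule (M : lmodType R) (Mg : int -> M -> Prop) : Prop :=
  directSumDecomp Mg /\
  forall (m n : int) r x, 0 <= m -> Rg m r -> Mg n x -> sumLe Mg (m + n) (r *: x).

Definition LSGmodule (M : lmodType R) (Mg : int -> M -> Prop) : Prop :=
  SGmodule Mg /\ forall n m r x, Rprime Rg n r -> Mg m x -> Mg (n + m) (r *: x).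

Definition submodule (M : lmodType R) (N : M -> Prop) : Prop :=
  [/\ N 0, (forall x y, N x -> N y -> N (x + y)) & (forall r x, N x -> N (r *: x))].

Definition SGsubmodule (M : lmodType R) (Mg : int -> M -> Prop) (N : M -> Prop) :=
  submodule N /\
  forall x, N x -> sumIn (fun _ => True) (fun k y => Mg k y /\ N y) x.

Definition torsionMod (M : lmodType R) (N : M -> Prop) (x : M) : Prop :=
  exists (t k : nat), forall r, idealPow (Rge Rg t%:Z) k r -> N (r *: x).

Definition torsion (M : lmodType R) (x : M) : Prop :=
  torsionMod (fun y : M => y = 0) x.

Definition linearOn (N Q : lmodType R) (N' : N -> Prop) (f : N -> Q) : Prop :=
  (forall x y, N' x -> N' y -> f (x + y) = f x + f y) /\
  (forall r x, N' x -> f (r *: x) = r *: f x).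

Definition Tinjective (Q : lmodType R) : Prop :=
  forall (N : lmodType R) (N' : N -> Prop), submodule N' ->
    (forall x, torsionMod N' x) ->
    forall f : N -> Q, linearOn N' f ->
      exists g : {linear N -> Q}, forall x, N' x -> g x = f x.

(* (Q, iota) is the module of quotients Q(M) of M: iota : M -> Q has kernel
   T(M) (so it embeds M' = M/T(M)), Q is T-torsion-free, T-injective, and
   Q / iota(M) is torsion *)
Definition moduleOfQuotients (M Q : lmodType R) (iota : {linear M -> Q}) : Prop :=
  [/\ (forall x, iota x = 0 <-> torsion x),
      (forall xi : Q, torsion xi -> xi = 0),
      Tinjective Q &
      (forall xi : Q, torsionMod (fun y => exists m, y = iota m) xi)].

Definition Qgrad (M Q : lmodType R) (Mg : int -> M -> Prop) (iota : {linear M -> Q})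
    (k : int) (xi : Q) : Prop :=
  exists (n t : nat),
    (forall r, idealPow (Rge Rg n%:Z) t r -> exists m, r *: xi = iota m) /\
    (forall (j : int) s, Rprime Rg j s -> idealPow (Rge Rg n%:Z) t s ->
       exists m, Mg (k + j) m /\ s *: xi = iota m).

Definition homogeneousOn (N Q : lmodType R) (Ng : int -> N -> Prop)
    (Qg : int -> Q -> Prop) (N' : N -> Prop) (f : N -> Q) : Prop :=
  forall n x, N' x -> Ng n x -> Qg n (f x).

Definition TclosedLSG (Q : lmodType R) (Qg : int -> Q -> Prop) : Prop :=
  LSGmodule Qg /\
  forall (N : lmodType R) (Ng : int -> N -> Prop), LSGmodule Ng ->
  forall N' : N -> Prop, SGsubmodule Ng N' -> (forall x, torsionMod N' x) ->
  forall f : N -> Q, linearOn N' f -> homogeneousOn Ng Qg N' f ->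
    exists g : {linear N -> Q},
      [/\ homogeneousOn Ng Qg (fun _ => True) g,
          (forall x, N' x -> g x = f x) &
          (forall h : {linear N -> Q}, homogeneousOn Ng Qg (fun _ => True) h ->
             (forall x, N' x -> h x = f x) -> forall x, h x = g x)].
End Modules.
End Ring.

(* Main.v *)
Require Import Defs.
From mathcomp Require Import all_boot all_order all_algebra.
From mathcomp Require Import zify.
From Stdlib Require Import ClassicalEpsilon Classical FunctionalExtensionality PropExtensionality.
Set Implicit Arguments. Unset Strict Implicit. Unset Printing Implicit Defensive.
Import Order.TTheory GRing.Theory Num.Theory.
Local Open Scope ring_scope.

Lemma big_supp (V : nmodType) (F : int -> V) (A B : seq int) :
  uniq A -> uniq B -> {subset A <= B} -> (forall y, y \notin A -> F y = 0) ->
  \sum_(y <- B) F y = \sum_(y <- A) F y.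
Proof.
move=> uA uB sAB F0.
rewrite (bigID (fun y => y \in A)) /= [X in _ + X]big1 ?addr0; last first.
  by move=> y /F0.
rewrite -big_filter; apply: perm_big; apply: uniq_perm => //.
  exact: filter_uniq.
by move=> y; rewrite mem_filter; apply/andP/idP => [[]//|yA]; split=> //; apply: sAB.
Qed.

Section Comp.
Variable V : zmodType.
Variable P : int -> V -> Prop.
Hypothesis HP : directSumDecomp P.

Lemma P0 k : P k 0.
Proof. by case: HP => H _ _; case: (H k). Qed.
Lemma PB k x y : P k x -> P k y -> P k (x - y).
Proof. by case: HP => H _ _; case: (H k) => _; apply. Qed.
Lemma PN k x : P k x -> P k (- x).
Proof. by move=> Hx; rewrite -sub0r; apply: PB => //; apply: P0. Qed.
Lemma PD k x y : P k x -> P k y -> P k (x + y).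
Proof. by move=> Hx Hy; rewrite -[y]opprK; apply: PB => //; apply: PN. Qed.
Lemma Psum (I : eqType) k (r : seq I) (F : I -> V) :
  (forall i, i \in r -> P k (F i)) -> P k (\sum_(i <- r) F i).
Proof.
elim: r => [|a r IH] H; first by rewrite big_nil; apply: P0.
rewrite big_cons; apply: PD; first by apply: H; rewrite inE eqxx.
by apply: IH => i ir; apply: H; rewrite inE ir orbT.
Qed.

Lemma normalize (c : int -> Prop) x : sumIn c P x ->
  exists s (f : int -> V), [/\ uniq s, (forall k, k \in s -> c k /\ P k (f k)) &
     x = \sum_(k <- s) f k].
Proof.
case=> s [f [Hs ->]]; elim: s Hs => [|k0 s IH] Hs.
  by exists [::], f; rewrite big_nil.
have [s' [f' [us' Hs' E]]] : exists s' (f' : int -> V),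
  [/\ uniq s', (forall k, k \in s' -> c k /\ P k (f' k)) & \sum_(k <- s) f k = \sum_(k <- s') f' k].
  by apply: IH => k ks; apply: Hs; rewrite inE ks orbT.
have [ck0 Pk0] : c k0 /\ P k0 (f k0) by apply: Hs; rewrite inE eqxx.
rewrite big_cons E.
case: (boolP (k0 \in s')) => k0s'.
  exists s', (fun k => if k == k0 then f' k + f k0 else f' k); split => //.
    move=> k ks; case: eqP => [->|_]; last exact: Hs'.
    by have [? ?] := Hs' _ k0s'; split=> //; apply: PD.
  rewrite (bigD1_seq k0) //= (bigD1_seq k0) //= eqxx.
  rewrite [X in _ = _ + X](eq_bigr (fun k => f' k)); last by move=> i /negPf ->.
  by rewrite addrCA addrA [f' k0 + _]addrC.
exists (k0 :: s'), (fun k => if k == k0 then f k0 else f' k); split => //.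
    by rewrite /= k0s'.
  move=> k; rewrite inE; case: eqP => [->|_] //= ks; exact: Hs'.
rewrite big_cons eqxx; congr (_ + _); apply: eq_big_seq => k ks.
by case: eqP => // E'; move: k0s'; rewrite -E' ks.
Qed.

Lemma decomp_ex x : exists sf : seq int * (int -> V),
  [/\ uniq sf.1, (forall k, k \in sf.1 -> P k (sf.2 k)) & x = \sum_(k <- sf.1) sf.2 k].
Proof.
case: HP => _ H _; have [s [f [us Hf E]]] := normalize (H x).
by exists (s, f); split => // k /Hf [].
Qed.

Definition dsf x := epsilon (inhabits ([::], fun _ => 0)) (fun sf : seq int * (int -> V) =>
  [/\ uniq sf.1, (forall k, k \in sf.1 -> P k (sf.2 k)) & x = \sum_(k <- sf.1) sf.2 k]).

Definition dcomp x y := if y \in (dsf x).1 then (dsf x).2 y else 0.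

Lemma dsf_spec x : [/\ uniq (dsf x).1, (forall k, k \in (dsf x).1 -> P k ((dsf x).2 k)) &
   x = \sum_(k <- (dsf x).1) (dsf x).2 k].
Proof. exact: (epsilon_spec _ _ (decomp_ex x)). Qed.

Lemma comp_P x y : P y (dcomp x y).
Proof.
rewrite /dcomp; case: ifP => [H|_]; last exact: P0.
by case: (dsf_spec x) => _ H' _; apply: H'.
Qed.

Lemma comp_supp x : exists s, [/\ uniq s, (forall y, y \notin s -> dcomp x y = 0) &
  x = \sum_(y <- s) dcomp x y].
Proof.
exists (dsf x).1; case: (dsf_spec x) => u _ E; split => //.
  by move=> y /negPf; rewrite /dcomp => ->.
rewrite {1}E; apply: eq_big_seq => y ys; by rewrite /dcomp ys.
Qed.

Lemma comp_uniq x (s : seq int) (g : int -> V) :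
  uniq s -> (forall k, k \in s -> P k (g k)) -> x = \sum_(k <- s) g k ->
  forall y, dcomp x y = if y \in s then g y else 0.
Proof.
move=> us Hg E y.
have [s0 [us0 Z0 E0]] := comp_supp x.
pose B := undup (s0 ++ s).
pose h k := dcomp x k - (if k \in s then g k else 0).
have uB : uniq B by apply: undup_uniq.
have HB : \sum_(k <- B) h k = 0.
  rewrite big_split /= sumrN.
  have -> : \sum_(k <- B) dcomp x k = x.
    rewrite [RHS]E0; apply: big_supp => //. all: try exact: Z0.
    by move=> k ks; rewrite mem_undup mem_cat ks.
  have -> : \sum_(k <- B) (if k \in s then g k else 0) = x.
    rewrite (@big_supp _ (fun k => if k \in s then g k else 0) s B) //; last 2 first.
    - by move=> k ks; rewrite mem_undup mem_cat ks orbT.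
    - by move=> k /negPf ->.
    by rewrite E; apply: eq_big_seq => k ->.
  by rewrite subrr.
case: HP => _ _ D.
case: (boolP (y \in B)) => yB.
  have HD : forall k, k \in B -> P k (h k).
    move=> k _; apply: PB; first exact: comp_P.
    by case: ifP => [/Hg//|_]; apply: P0.
  by move: (D B h uB HD HB y yB) => /eqP; rewrite subr_eq0 => /eqP.
move: yB; rewrite mem_undup mem_cat negb_or => /andP [/Z0 -> /negPf ->] //.
Qed.

Lemma comp_sup x (B : seq int) : uniq B -> (forall y, dcomp x y != 0 -> y \in B) ->
  x = \sum_(y <- B) dcomp x y.
Proof.
move=> uB HB; have [s0 [us0 Z0 E0]] := comp_supp x.
pose A := [seq y <- s0 | dcomp x y != 0].
have ZA : forall y, y \notin A -> dcomp x y = 0.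
  move=> y; rewrite mem_filter negb_and negbK => /orP [/eqP //|/Z0 //].
have uA : uniq A by apply: filter_uniq.
rewrite (@big_supp _ _ A B) //; last first.
  by move=> y; rewrite mem_filter => /andP [/HB].
rewrite [LHS]E0 (@big_supp _ _ A s0) // ?filter_uniq //.
by move=> y; rewrite mem_filter => /andP [].
Qed.

Lemma comp_homog d x y : P d x -> dcomp x y = if y == d then x else 0.
Proof.
move=> Hx; rewrite (@comp_uniq x [:: d] (fun _ => x)) //.
- by rewrite inE.
- by move=> k; rewrite inE => /eqP ->.
- by rewrite big_seq1.
Qed.

Lemma comp0 y : dcomp 0 y = 0.
Proof. by rewrite (comp_homog _ (P0 0)); case: ifP. Qed.

Lemma comp_add x x' y : dcomp (x + x') y = dcomp x y + dcomp x' y.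
Proof.
have [s [us Z E]] := comp_supp x; have [s' [us' Z' E']] := comp_supp x'.
pose B := undup (s ++ s').
rewrite (@comp_uniq (x + x') B (fun k => dcomp x k + dcomp x' k)) //.
- case: ifP => // /negbT; rewrite mem_undup mem_cat negb_or => /andP [/Z -> /Z' ->].
  by rewrite addr0.
- exact: undup_uniq.
- by move=> k _; apply: PD; apply: comp_P.
rewrite big_split /= -!comp_sup //.
- exact: undup_uniq.
- by move=> k nz; rewrite mem_undup mem_cat; apply/orP; right; apply/negPn/negP => /Z' /eqP; rewrite (negPf nz).
- exact: undup_uniq.
- by move=> k nz; rewrite mem_undup mem_cat; apply/orP; left; apply/negPn/negP => /Z /eqP; rewrite (negPf nz).
Qed.

Lemma compN x y : dcomp (- x) y = - dcomp x y.
Proof. by apply/eqP; rewrite -subr_eq0 opprK -comp_add addNr comp0. Qed.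

Lemma compB x x' y : dcomp (x - x') y = dcomp x y - dcomp x' y.
Proof. by rewrite comp_add compN. Qed.

Lemma comp_sum (I : Type) (r : seq I) (F : I -> V) y :
  dcomp (\sum_(i <- r) F i) y = \sum_(i <- r) dcomp (F i) y.
Proof.
elim: r => [|a r IH]; first by rewrite !big_nil comp0.
by rewrite !big_cons comp_add IH.
Qed.

Lemma deg_uniq i j x : P i x -> P j x -> x != 0 -> i = j.
Proof.
move=> Hi Hj nz; have := comp_homog i Hi; rewrite (comp_homog i Hj) eqxx.
by case: eqP => // _ E; move: nz; rewrite E eqxx.
Qed.

End Comp.

Lemma fun_sum (V W : nmodType) (phi : V -> W) (I : Type) (r : seq I) (F : I -> V) :
  phi 0 = 0 -> (forall a b, phi (a + b) = phi a + phi b) ->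
  phi (\sum_(i <- r) F i) = \sum_(i <- r) phi (F i).
Proof.
move=> H0 HD; elim: r => [|a r IH]; first by rewrite !big_nil.
by rewrite !big_cons HD IH.
Qed.

Lemma comp_shift (V W : zmodType) (P : int -> V -> Prop) (P' : int -> W -> Prop)
  (HP : directSumDecomp P) (HP' : directSumDecomp P') (phi : V -> W) (q : int) :
  phi 0 = 0 -> (forall a b, phi (a + b) = phi a + phi b) ->
  (forall y x, P y x -> P' (y + q) (phi x)) ->
  forall x z, dcomp P' (phi x) z = phi (dcomp P x (z - q)).
Proof.
move=> H0 HD Hphi x z.
have [s [us Z E]] := comp_supp HP x.
have E' : phi x = \sum_(k <- map (fun y => y + q) s) phi (dcomp P x (k - q)).
  rewrite big_map {1}E fun_sum //; apply: eq_bigr => i _; by rewrite addrK.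
have us' : uniq (map (fun y => y + q) s) by rewrite map_inj_uniq // => a b /addIr.
rewrite (comp_uniq HP' us' _ E').
  case: ifP => // /negbT zn; rewrite Z ?H0 //.
  by apply: contra zn => H; apply/mapP; exists (z - q) => //; rewrite subrK.
move=> k /mapP [y ys ->]; rewrite addrK; apply: Hphi; exact: comp_P.
Qed.

Lemma sum_if_eq (V : nmodType) (s : seq int) (k0 : int) (F : int -> V) :
  uniq s -> k0 \in s -> \sum_(k <- s) (if k == k0 then F k else 0) = F k0.
Proof.
move=> us ks; rewrite (bigD1_seq k0) //= eqxx big1 ?addr0 // => k /negPf -> //.
Qed.

Lemma list_choice (T : Type) (t0 : T) (s : seq int) (P : int -> T -> Prop) :
  (forall k, k \in s -> exists y, P k y) -> exists g : int -> T, forall k, k \in s -> P k (g k).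
Proof.
elim: s => [|a s IH] H; first by exists (fun _ => t0).
have [g Hg] : exists g : int -> T, forall k, k \in s -> P k (g k).
  by apply: IH => k ks; apply: H; rewrite inE ks orbT.
have [y Hy] := H a (mem_head _ _).
exists (fun k => if k == a then y else g k) => k; rewrite inE.
by case: eqP => [->|_] //= /Hg.
Qed.

Section RingBasics.
Variable R : pzRingType.
Variable Rg : int -> R -> Prop.
Hypothesis HR1 : Rg 0 1.

Lemma Rprime_mul a b x y : Rprime Rg a x -> Rprime Rg b y -> Rprime Rg (a + b) (x * y).
Proof.
move=> [Hx Px] [Hy Py]; split; first exact: Px.
by move=> m h Hh; rewrite -mulrA -addrA; apply: Px; apply: Py.
Qed.

Lemma Rsecond_mul a b x y : Rsecond Rg a x -> Rsecond Rg b y -> Rsecond Rg (a + b) (x * y).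
Proof.
move=> [Px Sx] [Py Sy]; split; first exact: Rprime_mul.
move=> m h Hh; rewrite mulrA.
have -> : a + b + m = b + (a + m) by lia.
by apply: Sy; apply: Sx.
Qed.

Lemma Rsecond_prime a x : Rsecond Rg a x -> Rprime Rg a x.
Proof. by case. Qed.

Lemma Rprime1 : Rprime Rg 0 1.
Proof. by split => // m h Hh; rewrite mul1r add0r. Qed.
Lemma Rsecond1 : Rsecond Rg 0 1.
Proof. by split; [exact: Rprime1| move=> m h Hh; rewrite mulr1 add0r]. Qed.

Lemma Rsecond_exp a x (N : nat) : Rsecond Rg a x -> Rsecond Rg (a * N%:Z) (x ^+ N).
Proof.
move=> Hx; elim: N => [|N IH]; first by rewrite expr0 mulr0; exact: Rsecond1.
rewrite exprS -[N.+1]addn1 PoszD mulrDr mulr1 addrC; exact: Rsecond_mul.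
Qed.

Lemma Rge_sumGe t y : sumGe Rg t y -> Rge Rg t y.
Proof. by move=> H I _ _ HI; apply: HI. Qed.
Lemma Rge0 t : Rge Rg t 0.
Proof. by move=> I [[H0 _ _] _] _ _. Qed.
Lemma RgeD t x y : Rge Rg t x -> Rge Rg t y -> Rge Rg t (x + y).
Proof. by move=> Hx Hy I HI H1 H2; case: (HI) => [[_ HD _] _]; apply: HD; [apply: Hx|apply: Hy]. Qed.
Lemma Rge_lmul t r x : Rge Rg t x -> Rge Rg t (r * x).
Proof. by move=> Hx I HI H1 H2; case: (HI) => [[_ _ HL] _]; apply: HL; apply: Hx. Qed.
Lemma Rge_rmul t r x : Rge Rg t x -> Rge Rg t (x * r).
Proof. by move=> Hx I HI H1 H2; case: (HI) => [_ HR]; apply: HR; apply: Hx. Qed.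

Lemma PW_lmul t k r x : idealPow (Rge Rg t) k x -> idealPow (Rge Rg t) k (r * x).
Proof.
elim: k r x => [//|k IH] r x [s [Hs ->]].
exists [seq (r * p.1, p.2) | p <- s]; split.
  move=> p /mapP [p' p's ->] /=; have [H1 H2] := Hs _ p's; split => //; exact: IH.
by rewrite big_map mulr_sumr; apply: eq_bigr => p _ /=; rewrite mulrA.
Qed.

Lemma PW_rmul t k r x : idealPow (Rge Rg t) k x -> idealPow (Rge Rg t) k (x * r).
Proof.
case: k => [//|k] [s [Hs ->]].
exists [seq (p.1, p.2 * r) | p <- s]; split.
  move=> p /mapP [p' p's ->] /=; have [H1 H2] := Hs _ p's; split => //; exact: Rge_rmul.
by rewrite big_map mulr_suml; apply: eq_bigr => p _ /=; rewrite mulrA.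
Qed.

Lemma PW_pow t k x : Rge Rg t x -> idealPow (Rge Rg t) k (x ^+ k).
Proof.
move=> Hx; elim: k => [//|k IH].
exists [:: (x ^+ k, x)]; split; first by move=> p; rewrite inE => /eqP -> /=.
by rewrite big_seq1 exprSr.
Qed.

End RingBasics.

Section Rev.
Variable R : pzRingType.
Hypothesis Hnoeth : leftNoetherian R.
Variable S : R -> Prop.
Hypothesis HS : leftOreSet S.

Lemma rev_max : exists t0, S t0 /\ forall t y, S t -> y * (t0 * t) = 0 -> y * t0 = 0.
Proof.
case: HS => S1 _ SM SO.
apply: NNPP => Hn.
have Hn' : forall t0, S t0 -> exists t, S t /\ exists y, y * (t0 * t) = 0 /\ y * t0 <> 0.
  move=> t0 St0; apply: NNPP => H1; apply: Hn; exists t0; split => // t y St Ey.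
  apply: NNPP => Hy; apply: H1; exists t; split => //; by exists y.
pose nxt t0 := t0 * epsilon (inhabits 1) (fun t => S t /\ exists y, y * (t0 * t) = 0 /\ y * t0 <> 0).
have Hnxt : forall t0, S t0 -> S (nxt t0) /\ exists y, y * nxt t0 = 0 /\ y * t0 <> 0.
  move=> t0 St0; have := epsilon_spec (inhabits 1) _ (Hn' t0 St0).
  move=> [St [y [E1 E2]]]; split; first by apply: SM.
  by exists y.
pose c k := iter k nxt 1.
have Sc : forall k, S (c k).
  by elim => [|k IH] //=; apply: (proj1 (Hnxt _ IH)).
have mono : forall k k' y, (k <= k')%N -> y * c k = 0 -> y * c k' = 0.
  move=> k k' y /subnK <-; elim: (k' - k)%N => [//|j IH] /= H.
  rewrite /nxt mulrA.
  by rewrite (IH H) mul0r.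
pose L y := exists k, y * c k = 0.
have HL : leftIdeal L.
  split; first by exists 0%N; rewrite mul0r.
    move=> x y [k Hk] [k' Hk']; exists (maxn k k').
    by rewrite mulrDl (mono k) ?leq_maxl // (mono k') ?leq_maxr // addr0.
  by move=> r x [k Hk]; exists k; rewrite -mulrA Hk mulr0.
have [K [g Hg]] := Hnoeth HL.
have gL : forall j, exists k, g j * c k = 0.
  move=> j; apply/(Hg (g j)); exists (fun j' => (j' == j)%:R).
  rewrite (bigD1 j) //= eqxx mul1r big1 ?addr0 // => j' /negPf ->; by rewrite mul0r.
have [kf Hkf] := fin_all_exists gL.
pose J := \max_(j < K) kf j.
have [y [E1 E2]] := proj2 (Hnxt _ (Sc J)).
apply: E2; have [cf Ecf] := proj1 (Hg y) (ex_intro _ J.+1 E1).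
rewrite Ecf mulr_suml big1 // => j _; rewrite -mulrA (mono (kf j)) ?mulr0 //.
exact: leq_bigmax.
Qed.

Lemma reversible r s : S s -> r * s = 0 -> exists s', S s' /\ s' * r = 0.
Proof.
move=> Ss Er; have [t0 [St0 Ht0]] := rev_max.
case: HS => _ _ _ SO; have [u [v [Sv E]]] := SO t0 r St0.
exists v; split => //; rewrite -E; apply: (Ht0 s) => //.
by rewrite mulrA E -mulrA Er mulr0.
Qed.

Lemma common_ore sigma (rs : seq R) : S sigma ->
  exists w, S w /\ forall rho, rho \in rs -> exists a, a * sigma = w * rho.
Proof.
case: HS => S1 _ SM SO Ss.
elim: rs => [|r0 rs [w [Sw Hw]]]; first by exists 1.
have [u [v [Sv E]]] := SO sigma (w * r0) Ss.
exists (v * w); split; first exact: SM.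
move=> rho; rewrite inE => /orP [/eqP ->|rr]; first by exists u; rewrite E mulrA.
by have [a Ea] := Hw _ rr; exists (v * a); rewrite -mulrA Ea mulrA.
Qed.

End Rev.

Section Main.
Variable R : pzRingType.
Variable Rg : int -> R -> Prop.
Variable M : lmodType R.
Variable Mg : int -> M -> Prop.
Variable Q : lmodType R.
Variable iota : {linear M -> Q}.
Hypothesis HR : directSumDecomp Rg.
Hypothesis HR1 : Rg 0 1.
Hypothesis Hpos : forall n x, n < 0 -> Rg n x -> x = 0.
Hypothesis Hnoeth : leftNoetherian R.
Variable n : nat.
Variable Sf : 'I_n -> R -> Prop.
Hypothesis Hgood : forall i, goodOreSet Rg (Sf i).
Hypothesis Hcov : forall x : 'I_n -> R, (forall i, Sf i (x i)) ->
  exists (t m : nat), forall r, idealPow (Rge Rg t%:Z) m r ->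
    exists c : 'I_n -> R, r = \sum_(i < n) c i * x i.
Variable xl : 'I_n -> R.
Variable dl : 'I_n -> nat.
Hypothesis Hxl : forall i, Sf i (xl i).
Hypothesis Hxd : forall i, Rsecond Rg (dl i)%:Z (xl i).
Hypothesis Hd1 : forall i, (0 < dl i)%N.
Hypothesis HM : LSGmodule Rg Mg.
Hypothesis Hq : moduleOfQuotients Rg iota.

Lemma HMd : directSumDecomp Mg.
Proof. by case: HM => [[]]. Qed.
Lemma HMsg m k r x : 0 <= m -> Rg m r -> Mg k x -> sumLe Mg (m + k) (r *: x).
Proof. by case: HM => [[_ H] _]; apply: H. Qed.
Lemma HMl k m r x : Rprime Rg k r -> Mg m x -> Mg (k + m) (r *: x).
Proof. by case: HM => _; apply. Qed.

Lemma SOreSet i : leftOreSet (Sf i).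
Proof. by case: (Hgood i). Qed.
Lemma S1 i : Sf i 1.
Proof. by case: (Hgood i) => [[]]. Qed.
Lemma SM i s s' : Sf i s -> Sf i s' -> Sf i (s * s').
Proof. by case: (Hgood i) => [[_ _ H _]] _ _; apply: H. Qed.
Lemma S_neq0 i : ~ Sf i 0.
Proof. by case: (Hgood i) => [[]]. Qed.
Lemma Sexp i s N : Sf i s -> Sf i (s ^+ N).
Proof.
move=> Hs; elim: N => [|N IH]; first by rewrite expr0; exact: S1.
by rewrite exprS; apply: SM.
Qed.
Lemma Sdeg i s : Sf i s -> exists e, Rsecond Rg e s.
Proof. by case: (Hgood i) => _ H _; apply: H. Qed.
Lemma SOre i s r : Sf i s -> exists u v, Sf i v /\ u * s = v * r.
Proof. by case: (Hgood i) => [[_ _ _ H]] _ _; apply: H. Qed.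
Lemma SgOre i s r : Sf i s -> (exists k, Rprime Rg k r) ->
  exists u v, (exists k, Rprime Rg k u) /\ Sf i v /\ u * s = v * r.
Proof. by case: (Hgood i) => _ _ H; apply: H. Qed.

Lemma xl_exp i N : Rsecond Rg ((dl i)%:Z * N%:Z) (xl i ^+ N).
Proof. exact: Rsecond_exp. Qed.

Lemma PowIn i (t k N : nat) : (t * k <= N)%N -> idealPow (Rge Rg t%:Z) k (xl i ^+ N).
Proof.
move=> HN; rewrite -(subnK HN) exprD; apply: PW_lmul; rewrite exprM; apply: PW_pow.
apply: Rge_sumGe; exists [:: ((dl i)%:Z * t%:Z)], (fun _ => xl i ^+ t); split.
  move=> k'; rewrite inE => /eqP ->; split; last by case: (xl_exp i t) => [[]].
  by rewrite -PoszM lez_nat leq_pmull ?Hd1.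
by rewrite big_seq1.
Qed.

Definition Tor (X : lmodType R) (z : X) := forall i, exists w, Sf i w /\ w *: z = 0.

Lemma torsionP (X : lmodType R) (z : X) : torsion Rg z <-> Tor z.
Proof.
split.
  move=> [t [k H]] i; exists (xl i ^+ (t * k)); split; first exact: Sexp.
  by apply: H; apply: PowIn.
move=> HT; have [w Hw] := fin_all_exists HT.
have [t [m H]] := @Hcov w (fun i => proj1 (Hw i)).
exists t, m => r /H [c ->]; rewrite scaler_suml big1 // => i _.
by rewrite -scalerA (proj2 (Hw i)) scaler0.
Qed.

Lemma Tor_scale (X : lmodType R) r (z : X) : Tor z -> Tor (r *: z).
Proof.
move=> HT i; have [w [Sw Hw]] := HT i; have [u [v [Sv E]]] := SOre r Sw.
by exists v; split => //; rewrite scalerA -E -scalerA Hw scaler0.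
Qed.

Lemma Tor0 (X : lmodType R) : Tor (0 : X).
Proof. by move=> i; exists 1; split; [exact: S1| rewrite scaler0]. Qed.

Lemma TorD (X : lmodType R) (z z' : X) : Tor z -> Tor z' -> Tor (z + z').
Proof.
move=> H H' i; have [w [Sw Hw]] := H i; have [w' [Sw' Hw']] := H' i.
have [u [v [Sv E]]] := SOre w' Sw.
exists (v * w'); split; first exact: SM.
by rewrite scalerDr -!scalerA Hw' !scaler0 addr0 scalerA -E -scalerA Hw scaler0.
Qed.

Lemma TorN (X : lmodType R) (z : X) : Tor z -> Tor (- z).
Proof. by move=> H; rewrite -scaleN1r; apply: Tor_scale. Qed.

Lemma TorB (X : lmodType R) (z z' : X) : Tor z -> Tor z' -> Tor (z - z').
Proof. by move=> H H'; apply: TorD => //; apply: TorN. Qed.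

Lemma Tor_sum (X : lmodType R) (I : eqType) (r : seq I) (F : I -> X) :
  (forall i, i \in r -> Tor (F i)) -> Tor (\sum_(i <- r) F i).
Proof.
elim: r => [|a r IH] H; first by rewrite big_nil; exact: Tor0.
rewrite big_cons; apply: TorD; first by apply: H; rewrite inE eqxx.
by apply: IH => i ir; apply: H; rewrite inE ir orbT.
Qed.

Lemma Tor_ann (X : lmodType R) i w (z : X) : Sf i w -> Tor (w *: z) ->
  exists w', Sf i w' /\ w' *: z = 0.
Proof.
move=> Sw HT; have [w1 [Sw1 H1]] := HT i.
by exists (w1 * w); split; [exact: SM | rewrite -scalerA].
Qed.

Lemma iota0 (m : M) : iota m = 0 <-> Tor m.
Proof. by case: Hq => H _ _ _; rewrite H; apply: torsionP. Qed.
Lemma Qtf (xi : Q) : Tor xi -> xi = 0.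
Proof. by case: Hq => _ H _ _ /torsionP; apply: H. Qed.
Lemma iotaZ r (m : M) : iota (r *: m) = r *: iota m.
Proof. exact: linearZ. Qed.
Lemma iota_eq (m m' : M) : iota m = iota m' <-> Tor (m - m').
Proof. rewrite -iota0 linearB; split => [->|H]; first by rewrite subrr. by apply/eqP; rewrite -subr_eq0 H. Qed.

Lemma compM_shift e v (m : M) z : Rprime Rg e v -> dcomp Mg (v *: m) z = v *: dcomp Mg m (z - e).
Proof.
move=> Hv; apply: (@comp_shift _ _ _ _ HMd HMd (fun x => v *: x) e).
- exact: scaler0.
- exact: scalerDr.
- by move=> y x Hx; rewrite addrC; apply: HMl.
Qed.

Lemma TSG (m : M) y : Tor m -> Tor (dcomp Mg m y).
Proof.
move=> HT i; have [w [Sw Hw]] := HT i; have [e He] := Sdeg Sw.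
exists w; split => //.
have := compM_shift m (y + e) (Rsecond_prime He).
by rewrite addrK Hw (comp0 HMd) => <-.
Qed.

Lemma L1 e v (m0 c : M) D : Rprime Rg e v -> Mg D c -> Tor (v *: m0 - c) ->
  Tor (v *: (m0 - dcomp Mg m0 (D - e))).
Proof.
move=> Hv Hc HT.
have [s [us Z E]] := comp_supp HMd m0.
pose B := undup ((D - e) :: s).
have uB : uniq B by apply: undup_uniq.
have EB : m0 = \sum_(y <- B) dcomp Mg m0 y.
  apply: (comp_sup HMd uB) => y nz; rewrite mem_undup inE; apply/orP; right.
  by apply/negPn/negP => /Z /eqP; rewrite (negPf nz).
have DB : (D - e) \in B by rewrite mem_undup inE eqxx.
rewrite {1}EB (bigD1_seq _ DB uB) /= addrAC subrr add0r scaler_sumr.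
rewrite -big_filter; apply: Tor_sum => y; rewrite mem_filter => /andP [ne _].
have := TSG (y + e) HT; rewrite (compB HMd) (compM_shift _ _ Hv) addrK (comp_homog HMd _ Hc).
case: eqP => [E'|_]; last by rewrite subr0.
by move: ne; rewrite -E' addrK eqxx.
Qed.


Lemma tors_iota (xi : Q) : exists (t k : nat), forall r, idealPow (Rge Rg t%:Z) k r ->
  exists m, r *: xi = iota m.
Proof. by case: Hq => _ _ _ H; have [t [k Ht]] := H xi; exists t, k => r /Ht [m ->]; exists m. Qed.

Definition Hg (k : int) (xi : Q) := forall i, exists v e m,
  [/\ Sf i v, Rsecond Rg e v, Mg (k + e) m & v *: xi = iota m].

Lemma Hg_Qgrad k xi : Hg k xi -> Qgrad Rg Mg iota k xi.
Proof.
move=> HH; have [t [k0 Ht]] := tors_iota xi; exists t, k0; split => // j s Hs HPW.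
have [m0 Em0] := Ht _ HPW.
pose c := dcomp Mg m0 (k + j).
exists c; split; first exact: (comp_P HMd).
rewrite Em0; apply/iota_eq => i.
have [v [e [m [Sv Hv Hm Ev]]]] := HH i.
have [u [v' [[q Hu] [Sv' E]]]] := SgOre Sv (ex_intro _ j Hs).
have [e' He'] := Sdeg Sv'.
pose c' := if u * v == 0 then 0 else u *: m.
have Hc' : Mg (k + j + e') c'.
  rewrite /c'; case: eqP => [_|nz]; first exact: (P0 HMd).
  have Hq1 : Rg (q + e) (u * v) by case: Hu => _ H; apply: H; case: Hv => [[]].
  have Hq2 : Rg (e' + j) (v' * s) by case: He' => [[_ H] _]; apply: H; case: Hs.
  have Eq : q + e = e' + j by apply: (deg_uniq HR Hq1); [rewrite E | apply/eqP].
  have -> : k + j + e' = q + (k + e) by lia.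
  exact: HMl.
have HT : Tor (v' *: m0 - c').
  rewrite /c'; case: eqP => [Z|nz].
    by rewrite subr0; apply/iota0; rewrite iotaZ -Em0 scalerA -E Z scale0r.
  by apply/iota_eq; rewrite !iotaZ -Em0 -Ev !scalerA E.
have := L1 (Rsecond_prime He') Hc' HT; rewrite addrK => HT'.
have [w' [Sw' Hw']] := Tor_ann Sv' HT'.
by exists w'.
Qed.

Lemma Qgrad_Hg k xi : Qgrad Rg Mg iota k xi -> Hg k xi.
Proof.
move=> [n0 [t0 [_ H2]]] i.
have HP : idealPow (Rge Rg n0%:Z) t0 (xl i ^+ (n0 * t0)) by apply: PowIn.
have [m [Hm Em]] := H2 _ _ (Rsecond_prime (xl_exp i (n0 * t0))) HP.
exists (xl i ^+ (n0 * t0)), ((dl i)%:Z * (n0 * t0)%N%:Z), m; split => //.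
- exact: Sexp.
- exact: xl_exp.
Qed.

Lemma HgP k xi : Hg k xi -> forall i, exists N0, forall N, (N0 <= N)%N ->
  exists m, Mg (k + (dl i)%:Z * N%:Z) m /\ xl i ^+ N *: xi = iota m.
Proof.
move=> /Hg_Qgrad [n0 [t0 [_ H2]]] i; exists (n0 * t0)%N => N HN.
exact: H2 (Rsecond_prime (xl_exp i N)) (PowIn i HN).
Qed.

Lemma Hg_iota k m : Mg k m -> Hg k (iota m).
Proof.
move=> Hm i; exists 1, 0, m; split; [exact: S1|exact: Rsecond1|by rewrite addr0|by rewrite scale1r].
Qed.

Lemma Hg0 k : Hg k 0.
Proof. by rewrite -(linear0 iota); apply: Hg_iota; exact: (P0 HMd). Qed.

Lemma HgB k x y : Hg k x -> Hg k y -> Hg k (x - y).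
Proof.
move=> Hx Hy i; have [N1 H1] := HgP Hx i; have [N2 H2] := HgP Hy i.
have [m1 [Hm1 E1]] := H1 (maxn N1 N2) (leq_maxl _ _).
have [m2 [Hm2 E2]] := H2 (maxn N1 N2) (leq_maxr _ _).
exists (xl i ^+ maxn N1 N2), ((dl i)%:Z * (maxn N1 N2)%:Z), (m1 - m2); split.
- exact: Sexp.
- exact: xl_exp.
- exact: (PB HMd Hm1 Hm2).
- by rewrite scalerBr E1 E2 linearB.
Qed.

Lemma Hg_lsg p k r xi : Rprime Rg p r -> Hg k xi -> Hg (p + k) (r *: xi).
Proof.
move=> Hr HH i; have [v [e [m [Sv Hv Hm Ev]]]] := HH i.
have [u [v' [[q Hu] [Sv' E]]]] := SgOre Sv (ex_intro _ p Hr).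
have [e' He'] := Sdeg Sv'.
exists v', e', (if u * v == 0 then 0 else u *: m); split => //.
  case: eqP => [_|nz]; first exact: (P0 HMd).
  have Hq1 : Rg (q + e) (u * v) by case: Hu => _ H; apply: H; case: Hv => [[]].
  have Hq2 : Rg (e' + p) (v' * r) by case: He' => [[_ H] _]; apply: H; case: Hr.
  have Eq : q + e = e' + p by apply: (deg_uniq HR Hq1); [rewrite E | apply/eqP].
  have -> : p + k + e' = q + (k + e) by lia.
  exact: HMl.
case: eqP => [Z|nz]; first by rewrite linear0 scalerA -E Z scale0r.
by rewrite scalerA -E -scalerA Ev iotaZ.
Qed.


Lemma HgP_list (s : seq int) (f : int -> Q) : (forall k, k \in s -> Hg k (f k)) -> forall i,
  exists N0, forall N, (N0 <= N)%N -> forall k, k \in s ->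
  exists m, Mg (k + (dl i)%:Z * N%:Z) m /\ xl i ^+ N *: f k = iota m.
Proof.
move=> H i; elim: s H => [|a s IH] H; first by exists 0%N.
have [N1 H1] := HgP (H a (mem_head _ _)) i.
have [N2 H2] : exists N0, forall N, (N0 <= N)%N -> forall k, k \in s ->
  exists m, Mg (k + (dl i)%:Z * N%:Z) m /\ xl i ^+ N *: f k = iota m.
  by apply: IH => k ks; apply: H; rewrite inE ks orbT.
exists (maxn N1 N2) => N HN k; rewrite inE => /orP [/eqP ->|ks].
  by apply: H1; apply: leq_trans HN; apply: leq_maxl.
by apply: H2 => //; apply: leq_trans HN; apply: leq_maxr.
Qed.

Lemma Hg_dir (s : seq int) (f : int -> Q) : uniq s -> (forall k, k \in s -> Hg k (f k)) ->
  \sum_(k <- s) f k = 0 -> forall k, k \in s -> f k = 0.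
Proof.
move=> us H E k0 k0s; apply: Qtf => i.
have [N HN] := HgP_list H i.
have [g Hg'] := list_choice 0 (HN N (leqnn _)).
exists (xl i ^+ N); split; first exact: Sexp.
have Hsum : Tor (\sum_(k <- s) g k).
  apply/iota0; rewrite linear_sum (eq_big_seq (fun k => xl i ^+ N *: f k)).
    by rewrite -scaler_sumr E scaler0.
  by move=> k /Hg' [].
have := TSG (k0 + (dl i)%:Z * N%:Z) Hsum.
rewrite (comp_sum HMd) (eq_big_seq (fun k => if k == k0 then g k else 0)).
  by rewrite sum_if_eq // (proj2 (Hg' _ k0s)) => /iota0.
move=> k ks; rewrite (comp_homog HMd _ (proj1 (Hg' _ ks))).
by rewrite (inj_eq (addIr _)) eq_sym.
Qed.


Lemma good_common_ore i sigma (rs : seq R) : Sf i sigma ->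
  (forall rho, rho \in rs -> exists k, Rprime Rg k rho) ->
  exists y, Sf i y /\ forall rho, rho \in rs ->
    exists b, (exists k, Rprime Rg k b) /\ b * sigma = y * rho.
Proof.
move=> Ss; elim: rs => [|r0 rs IH] Hrs; first by exists 1; split => //; exact: S1.
have [y [Sy Hy]] : exists y, Sf i y /\ forall rho, rho \in rs ->
    exists b, (exists k, Rprime Rg k b) /\ b * sigma = y * rho.
  by apply: IH => rho rr; apply: Hrs; rewrite inE rr orbT.
have [ey Hey] := Sdeg Sy.
have [k0 Hk0] := Hrs r0 (mem_head _ _).
have [u [v [[q Hu] [Sv E]]]] := SgOre (r := y * r0) Ss (ex_intro (fun k => Rprime Rg k (y * r0)) _ (Rprime_mul (Rsecond_prime Hey) Hk0)).
have [ev Hev] := Sdeg Sv.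
exists (v * y); split; first exact: SM.
move=> rho; rewrite inE => /orP [/eqP ->|rr].
  by exists u; split; [exists q | rewrite E mulrA].
have [b [[kb Hb] Eb]] := Hy _ rr.
exists (v * b); split; first by exists (ev + kb); apply: Rprime_mul => //; exact: Rsecond_prime.
by rewrite -mulrA Eb mulrA.
Qed.

Lemma glue (u : 'I_n -> R) (Su : forall l, Sf l (u l)) (c : 'I_n -> M) :
  (forall d : 'I_n -> R, \sum_l d l * u l = 0 -> \sum_l d l *: iota (c l) = 0) ->
  exists zeta : Q, forall l, u l *: zeta = iota (c l).
Proof.
move=> WD; case: Hq => _ _ HTI _.
pose N' := fun r : R^o => exists d : 'I_n -> R, r = \sum_l d l * u l.
have subN : submodule N'.
  split.
  - by exists (fun _ => 0); rewrite big1 // => l _; rewrite mul0r.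
  - move=> x y [dx ->] [dy ->]; exists (fun l => dx l + dy l).
    by rewrite -big_split; apply: eq_bigr => l _; rewrite mulrDl.
  - move=> r x [dx ->]; exists (fun l => r * dx l).
    rewrite [LHS]mulr_sumr; apply: eq_bigr => l _; by rewrite mulrA.
have torN : forall x : R^o, torsionMod Rg N' x.
  move=> x; have [t [m Ht]] := @Hcov u Su; exists t, m => r Hr.
  have [cf Ecf] := Ht _ (PW_rmul x Hr); by exists cf.
pose f := fun r : R^o => \sum_l (epsilon (inhabits (fun _ => 0))
  (fun d : 'I_n -> R => r = \sum_l d l * u l)) l *: iota (c l).
have key : forall (r : R^o) d, r = \sum_l d l * u l -> f r = \sum_l d l *: iota (c l).
  move=> r d Er.
  have E0 := epsilon_spec (inhabits (fun _ => 0)) (fun d : 'I_n -> R => r = \sum_l d l * u l) (ex_intro _ d Er).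
  set d0 := epsilon _ _ in E0; rewrite /f -/d0.
  apply/eqP; rewrite -subr_eq0 -sumrB.
  rewrite (eq_bigr (fun l => (d0 l - d l) *: iota (c l))); last by move=> l _; rewrite scalerBl.
  apply/eqP; apply: WD.
  rewrite (eq_bigr (fun l => d0 l * u l - d l * u l)); last by move=> l _; rewrite mulrBl.
  by rewrite sumrB -E0 -Er subrr.
have linf : linearOn N' f.
  split.
    move=> x y [dx Ex] [dy Ey].
    rewrite (key _ _ Ex) (key _ _ Ey) (key _ (fun l => dx l + dy l)).
      by rewrite -big_split; apply: eq_bigr => l _; rewrite scalerDl.
    by rewrite Ex Ey -big_split; apply: eq_bigr => l _; rewrite mulrDl.
  move=> r x [dx Ex].
  rewrite (key _ _ Ex) (key _ (fun l => r * dx l)).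
    by rewrite scaler_sumr; apply: eq_bigr => l _; rewrite scalerA.
  rewrite Ex; change (r * \sum_l dx l * u l = \sum_l r * dx l * u l).
  rewrite mulr_sumr; apply: eq_bigr => l _; by rewrite mulrA.
have [g Hg'] := HTI _ N' subN torN f linf.
exists (g 1) => l.
have -> : u l *: g 1 = g (u l) by rewrite -linearZ /=; congr (g _); rewrite /GRing.scale /= mulr1.
have Nl : N' (u l : R^o).
  exists (fun j => (j == l)%:R); rewrite (bigD1 l) //= eqxx mul1r big1 ?addr0 //.
  by move=> j /negPf ->; rewrite mul0r.
rewrite Hg' // (key _ (fun j => (j == l)%:R)).
  by rewrite (bigD1 l) //= eqxx scale1r big1 ?addr0 // => j /negPf ->; rewrite scale0r.
by rewrite (bigD1 l) //= eqxx mul1r big1 ?addr0 // => j /negPf ->; rewrite mul0r.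
Qed.


Lemma wd (xi : Q) (u : 'I_n -> R) (eu : 'I_n -> int) (m : 'I_n -> M) (k : int) :
  (forall l, Sf l (u l)) -> (forall l, Rsecond Rg (eu l) (u l)) ->
  (forall l, u l *: xi = iota (m l)) ->
  forall d : 'I_n -> R, \sum_l d l * u l = 0 ->
    \sum_l d l *: iota (dcomp Mg (m l) (k + eu l)) = 0.
Proof.
move=> Su Hu Em d Ed; apply: Qtf => p.
pose c l := dcomp Mg (m l) (k + eu l).
have Hrs : forall rho, rho \in [seq u p * u l | l <- enum 'I_n] -> exists k, Rprime Rg k rho.
  move=> rho /mapP [l _ ->]; eexists.
  exact: (Rprime_mul (Rsecond_prime (Hu p)) (Rsecond_prime (Hu l))).
have [y [Sy Hy]] := good_common_ore (Su p) Hrs.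
have [b Hb] : exists b : 'I_n -> R, forall l, (exists k, Rprime Rg k (b l)) /\ b l * u p = y * (u p * u l).
  have H0 : forall l, exists bl, (exists k, Rprime Rg k bl) /\ bl * u p = y * (u p * u l).
    by move=> l; apply: Hy; apply/mapP; exists l => //; exact: mem_enum.
  by have [b Hb] := fin_all_exists H0; exists b.
have [ey Hey] := Sdeg Sy.
pose Y := y * u p.
have HY : Rsecond Rg (ey + eu p) Y by apply: Rsecond_mul.
have SY : Sf p Y by apply: SM.
have [w [Sw Hw]] := common_ore (SOreSet p) [seq d l | l <- enum 'I_n] SY.
have [a Ha] : exists a : 'I_n -> R, forall l, a l * Y = w * d l.
  have H0 : forall l, exists al, al * Y = w * d l.
    by move=> l; apply: Hw; apply/mapP; exists l => //; exact: mem_enum.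
  by have [a Ha] := fin_all_exists H0; exists a.
have claim : forall l, iota (Y *: c l) = iota (b l *: c p).
  move=> l; have [[beta Hbeta] Eb] := Hb l.
  have HT : Tor (Y *: m l - b l *: m p).
    by apply/iota_eq; rewrite !iotaZ -!Em !scalerA Eb mulrA.
  have Es1 : dcomp Mg (Y *: m l) (k + eu l + (ey + eu p)) = Y *: c l.
    by rewrite (compM_shift _ _ (Rsecond_prime HY)) addrK.
  case: (eqVneq (b l * u p) 0) => [Z|nz].
    have T1 : Tor (Y *: m l).
      by apply/iota0; rewrite iotaZ -Em scalerA /Y -mulrA -Eb Z scale0r.
    have T2 : Tor (b l *: m p) by apply/iota0; rewrite iotaZ -Em scalerA Z scale0r.
    have := TSG (k + eu l + (ey + eu p)) T1; rewrite Es1 => /iota0 ->.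
    have := TSG (k + eu p + beta) T2; rewrite (compM_shift _ _ Hbeta) addrK => /iota0 ->.
    by [].
  have Hq1 : Rg (beta + eu p) (b l * u p) by case: Hbeta => _ H; apply: H; case: (Hu p) => [[]].
  have Hq2 : Rg (ey + (eu p + eu l)) (y * (u p * u l)).
    case: Hey => [[_ H] _]; apply: H.
    have := Rprime_mul (Rsecond_prime (Hu p)) (Rsecond_prime (Hu l)); by case.
  have Eq : beta + eu p = ey + (eu p + eu l) by apply: (deg_uniq HR Hq1); [rewrite Eb | ].
  have := TSG (k + eu l + (ey + eu p)) HT.
  rewrite (compB HMd) Es1 (compM_shift _ _ Hbeta).
  have -> : k + eu l + (ey + eu p) - beta = k + eu p by lia.
  by move/iota_eq.
have Ewz : w *: (\sum_l d l *: iota (c l)) = (\sum_l a l * b l) *: iota (c p).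
  rewrite scaler_sumr scaler_suml; apply: eq_bigr => l _.
  by rewrite scalerA -Ha -scalerA -iotaZ claim iotaZ scalerA.
have Ebeta : (\sum_l a l * b l) * u p = 0.
  rewrite mulr_suml (eq_bigr (fun l => w * (d l * u l))).
    by rewrite -mulr_sumr Ed mulr0.
  move=> l _; have [_ Eb] := Hb l.
  have -> : a l * b l * u p = a l * Y * u l by rewrite -mulrA Eb /Y !mulrA.
  by rewrite Ha mulrA.
have [s' [Ss' Es']] := reversible Hnoeth (SOreSet p) (Su p) Ebeta.
exists (s' * w); split; first exact: SM.
by rewrite -scalerA Ewz scalerA Es' scale0r.
Qed.


Lemma cover (xi : Q) : sumIn (fun _ => True) Hg xi.
Proof.
have [t0 [k0 Ht]] := tors_iota xi.
pose u l := xl l ^+ (t0 * k0).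
pose eu l := (dl l)%:Z * (t0 * k0)%N%:Z.
have Su : forall l, Sf l (u l) by move=> l; apply: Sexp.
have Hu : forall l, Rsecond Rg (eu l) (u l) by move=> l; apply: xl_exp.
have [m Em] : exists m : 'I_n -> M, forall l, u l *: xi = iota (m l).
  have H0 : forall l, exists ml, u l *: xi = iota ml by move=> l; apply: Ht; apply: PowIn.
  by have [m Hm] := fin_all_exists H0; exists m.
have [sl Hsl] : exists sl : 'I_n -> seq int, forall l : 'I_n,
    forall y, dcomp Mg (m l) y != 0 -> y \in sl l.
  have H0 : forall l : 'I_n, exists s : seq int, forall y, dcomp Mg (m l) y != 0 -> y \in s.
    move=> l; have [s [_ Z _]] := comp_supp HMd (m l); exists s => y nz.
    by apply/negPn/negP => /Z /eqP; rewrite (negPf nz).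
  by have [sl Hs] := fin_all_exists H0; exists sl.
pose K := undup (flatten [seq [seq y - eu l | y <- sl l] | l <- enum 'I_n]).
have uK : uniq K by apply: undup_uniq.
have Hz : forall k, k \in K -> exists zeta : Q, forall l, u l *: zeta = iota (dcomp Mg (m l) (k + eu l)).
  by move=> k _; apply: glue => //; apply: wd Su Hu Em.
have [zeta Hzeta] := list_choice 0 Hz.
exists K, zeta; split.
  move=> k kK; split => // l.
  exists (u l), (eu l), (dcomp Mg (m l) (k + eu l)); split => //.
  - exact: comp_P HMd _ _.
  - exact: Hzeta.
apply/eqP; rewrite -subr_eq0; apply/eqP; apply: Qtf => l.
exists (u l); split => //.
rewrite scalerBr scaler_sumr (eq_big_seq (fun k => iota (dcomp Mg (m l) (k + eu l)))); last first.
  by move=> k kK; apply: Hzeta.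
rewrite -linear_sum Em -linearB; apply/iota0.
have -> : \sum_(k <- K) dcomp Mg (m l) (k + eu l) = m l.
  rewrite -(big_map (fun k => k + eu l) xpredT (fun y => dcomp Mg (m l) y)).
  apply/esym; apply: (comp_sup HMd).
    by rewrite map_inj_uniq // => a b /addIr.
  move=> y nz; apply/mapP; exists (y - eu l); last by rewrite subrK.
  rewrite mem_undup; apply/flattenP; exists [seq y - eu l | y <- sl l].
    by apply/mapP; exists l => //; exact: mem_enum.
  by apply/mapP; exists y => //; apply: Hsl.
by rewrite subrr; exact: Tor0.
Qed.


Lemma HQ : directSumDecomp Hg.
Proof.
split.
- by move=> k; split; [exact: Hg0 | move=> x y; apply: HgB].
- exact: cover.
- exact: Hg_dir.
Qed.

Lemma compR_shift (w : R) e a z : Rsecond Rg e w ->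
  dcomp Rg (a * w) z = dcomp Rg a (z - e) * w.
Proof.
move=> Hw; apply: (@comp_shift _ _ _ _ HR HR (fun x => x * w) e).
- exact: mul0r.
- by move=> x y; rewrite mulrDl.
- by move=> y x Hx; rewrite addrC; case: Hw => _; apply.
Qed.

Lemma Hg_sg m k0 r xi : 0 <= m -> Rg m r -> Hg k0 xi -> sumLe Hg (m + k0) (r *: xi).
Proof.
move=> m0 Hr Hxi.
have [K [zeta [uK HK EK]]] := normalize HQ (cover (r *: xi)).
have claim : forall k, k \in K -> m + k0 < k -> zeta k = 0.
  move=> k kK lt; apply: Qtf => i.
  have [N0 HN] := HgP Hxi i; have [b [Hb Eb]] := HN N0 (leqnn _).
  have [u [v [Sv E]]] := SOre r (Sexp N0 (Hxl i)).
  have [ev Hev] := Sdeg Sv.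
  pose dN := (dl i)%:Z * N0%:Z.
  pose u' := dcomp Rg u (ev + m - dN).
  have Hvr : Rg (ev + m) (v * r) by case: Hev => [[_ H] _]; apply: H.
  have Eu' : u' * xl i ^+ N0 = v * r.
    rewrite /u' -(compR_shift _ _ (xl_exp i N0)) E (comp_homog HR _ Hvr) eqxx //.
  have Evr : v *: (r *: xi) = iota (u' *: b) by rewrite scalerA -Eu' -scalerA Eb iotaZ.
  have Hsl : sumLe Mg (ev + m + k0) (u' *: b).
    case: (lerP 0 (ev + m - dN)) => [h0|h0].
      have := HMsg h0 (comp_P HR u _) Hb.
      by have -> : ev + m - dN + (k0 + dN) = ev + m + k0 by lia.
    rewrite /u' (Hpos h0 (comp_P HR u _)) scale0r.
    by exists [::], (fun _ => 0); split => //; rewrite big_nil.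
  have [s' [g' [Hg'' Eg']]] := Hsl.
  have E2 : \sum_(k' <- K) v *: zeta k' = \sum_(j <- s') iota (g' j).
    by rewrite -scaler_sumr -EK Evr Eg' linear_sum.
  have L1' : dcomp Hg (\sum_(k' <- K) v *: zeta k') (ev + k) = v *: zeta k.
    rewrite (comp_sum HQ) -[RHS](sum_if_eq (fun k' => v *: zeta k') uK kK).
    apply: eq_big_seq => k' k'K.
    rewrite (comp_homog HQ _ (Hg_lsg (Rsecond_prime Hev) (proj2 (HK _ k'K)))).
    by rewrite (inj_eq (addrI _)) eq_sym.
  have R1 : dcomp Hg (\sum_(j <- s') iota (g' j)) (ev + k) = 0.
    rewrite (comp_sum HQ) big1_seq // => j js.
    have [lej Hj] := Hg'' j js.
    rewrite (comp_homog HQ _ (Hg_iota Hj)); case: eqP => // Ej.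
    by move: lej; rewrite -Ej; lia.
  by exists v; split => //; rewrite -L1' E2 R1.
exists [seq k <- K | k <= m + k0], zeta; split.
  by move=> k; rewrite mem_filter => /andP [Hk kK]; split => //; case: (HK k kK).
rewrite big_filter [LHS]EK [RHS]big_mkcond /=; apply: eq_big_seq => k kK.
case: leP => // lt; by rewrite claim.
Qed.

Lemma Hg_ext : forall (N : lmodType R) (Ng : int -> N -> Prop), LSGmodule Rg Ng ->
  forall N' : N -> Prop, SGsubmodule Ng N' -> (forall x, torsionMod Rg N' x) ->
  forall f : N -> Q, linearOn N' f -> homogeneousOn Ng Hg N' f ->
    exists g : {linear N -> Q},
      [/\ homogeneousOn Ng Hg (fun _ => True) g,
          (forall x, N' x -> g x = f x) &
          (forall h : {linear N -> Q}, homogeneousOn Ng Hg (fun _ => True) h ->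
             (forall x, N' x -> h x = f x) -> forall x, h x = g x)].
Proof.
move=> N Ng HN N' [subN _] torN f linf homf.
case: Hq => _ _ HTI _.
have [g Hg'] := HTI _ N' subN torN f linf.
exists g; split => //.
  move=> k x _ Hx i.
  have [t [k1 Ht]] := torN x.
  pose w := xl i ^+ (t * k1).
  have Nw : N' (w *: x) by apply: Ht; apply: PowIn.
  have Hw := xl_exp i (t * k1).
  have Ngw : Ng ((dl i)%:Z * (t * k1)%N%:Z + k) (w *: x).
    by case: HN => _ H; apply: H => //; exact: Rsecond_prime.
  have [v [e [mm [Sv He Hmm Emm]]]] := homf _ _ Nw Ngw i.
  exists (v * w), (e + (dl i)%:Z * (t * k1)%N%:Z), mm; split.
  - by apply: SM => //; apply: Sexp.
  - exact: Rsecond_mul He Hw.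
  - by move: Hmm; congr (Mg _ _); lia.
  - by rewrite -scalerA -linearZ Hg'.
move=> h _ Hh x; apply/eqP; rewrite -subr_eq0; apply/eqP; apply: Qtf.
apply/torsionP; have [t [k1 Ht]] := torN x.
exists t, k1 => r Hr; rewrite scalerBr -!linearZ Hh ?Hg' ?subrr //; exact: Ht.
Qed.

Lemma Qgrad_Hg_eq : Qgrad Rg Mg iota = Hg.
Proof.
apply: functional_extensionality => k; apply: functional_extensionality => xi.
apply: propositional_extensionality; split; [exact: Qgrad_Hg | exact: Hg_Qgrad].
Qed.

Lemma main_section : TclosedLSG Rg (Qgrad Rg Mg iota).
Proof.
rewrite Qgrad_Hg_eq; split; last exact: Hg_ext.
split; last by move=> p k r xi Hr Hxi; apply: Hg_lsg.
split; [exact: HQ | move=> m k r xi m0 Hr Hxi; exact: Hg_sg].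
Qed.

End Main.

Lemma deg_pos (R : pzRingType) (Rg : int -> R -> Prop) (S : R -> Prop) :
  directSumDecomp Rg -> goodOreSet Rg S ->
  forall x, S x -> sumGe Rg 1 x -> exists d : nat, (0 < d)%N /\ Rsecond Rg d%:Z x.
Proof.
move=> HR [[_ S0 _ _] Sd _] x Sx [s [f [Hs Ex]]].
have [e He] := Sd x Sx.
have He' : Rg e x by case: He => [[]].
have C := comp_homog HR e He'; rewrite eqxx in C.
case: (lerP 1 e) => [le1|lt1].
  exists (absz e); split; first by lia.
  by have -> : (absz e)%:Z = e by lia.
suff E0 : x = 0 by exfalso; apply: S0; rewrite -E0.
rewrite -C {1}Ex (comp_sum HR) big1_seq // => k ks.
have [k1 Hk] := Hs k ks; rewrite (comp_homog HR _ Hk); case: eqP => // Ek.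
by move: lt1; rewrite Ek; lia.
Qed.

Unset Implicit Arguments.
Theorem mainTheorem8 (R : pzRingType) (Rg : int -> R -> Prop)
  (M : lmodType R) (Mg : int -> M -> Prop)
  (Q : lmodType R) (iota : {linear M -> Q}) :
  schematic Rg -> LSGmodule Rg Mg -> moduleOfQuotients Rg iota ->
  TclosedLSG Rg (Qgrad Rg Mg iota).
Proof.
move=> [[[HR _ HR1] Hpos] Hnoeth [n [Sf [Hgood [Hx Hcov]]]]] HM Hq.
have H0 : forall i, exists xd : R * nat, [/\ Sf i xd.1, Rsecond Rg (xd.2)%:Z xd.1 & (0 < xd.2)%N].
  move=> i; have [x [Sx Gx]] := Hx i.
  have [d [d0 Hd]] := deg_pos HR (Hgood i) Sx Gx.
  by exists (x, d); split.
have [xd Hxd] := fin_all_exists H0.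
apply: (@main_section R Rg M Mg Q iota HR HR1 Hpos Hnoeth n Sf Hgood Hcov
  (fun i => (xd i).1) (fun i => (xd i).2)) => //.
- by move=> i; case: (Hxd i).
- by move=> i; case: (Hxd i).
- by move=> i; case: (Hxd i).
Qed.
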